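(* Let $\delta$ be a positive integer, let $$p_\delta(x)=\left(\frac{1+\sqrt{1-4x}}{2}\right)^{\delta+1}+\left(\frac{1-\sqrt{1-4x}}{2}\right)^{\delta+1}$$ (a polynomial in $x$), let $d=\deg p_\delta$ and let $\vartheta_1,\dots,\vartheta_d$ be the roots of $p_\delta$. Then for every positive integer $m$, $$\zeta(m,\delta)=\frac{1}{\delta+1}\sum_{i=1}^{d}\left(\frac{1}{\vartheta_i}\right)^{\lfloor (m+1)/2\rfloor}.$$
   Context: For positive integers $m$ and $\delta$, a $\delta$-deviation set of size $m$ is a finite sequence $(\alpha_1,\dots,\alpha_\ell)$ of positive integers such that (i) $\sum_i\alpha_i=m$; (ii) $\big|\sum_i\alpha_{2i-1}-\sum_i\alpha_{2i}\big|\le 1$; (iii) $\big|\sum_{1\le i\le j}(-1)^{i-1}\alpha_i\big|\le\delta$ for every $j\ge1$; and $\zeta(m,\delta)$ is the number of $\delta$-deviation sets of size $m$. *)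

(* Defs.v *)
From mathcomp Require Import all_boot all_order all_algebra all_field.
Set Implicit Arguments. Unset Strict Implicit. Unset Printing Implicit Defensive.
Import Order.TTheory GRing.Theory Num.Theory.

Fixpoint altsum (s : seq nat) : int :=
  if s is a :: s' then (a%:Z - altsum s')%R else 0%R.

(* (i),(ii),(iii) of the definition of a delta-deviation set of size m,
   plus positivity of the entries. *)
Definition deviation_set (m delta : nat) (s : seq nat) : bool :=
  [&& all (fun a => 0 < a) s,
      sumn s == m,
      (`|altsum s| <= 1)%N &
      all (fun j => `|altsum (take j s)| <= delta)%N (iota 1 (size s))].
(* For j > size s, take j s = s, so the condition for such j coincides with
   that for j = size s (and m > 0 forces s nonempty). *)

(* compositions_fuel n m : all sequences of positive integers summing to m
   (when n >= m), each listed once. *)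
Fixpoint compositions_fuel (n m : nat) : seq (seq nat) :=
  if m == 0 then [:: [::]] else
  if n is n'.+1 then
    flatten [seq [seq a :: t | t <- compositions_fuel n' (m - a)] | a <- iota 1 m]
  else [::].

Definition compositions (m : nat) : seq (seq nat) := compositions_fuel m m.

Definition zeta (m delta : nat) : nat := count (deviation_set m delta) (compositions m).

(* Main.v *)
Require Import Defs.
From mathcomp Require Import all_boot all_order all_algebra all_field.
From mathcomp Require Import ring zify.
Import Order.TTheory GRing.Theory Num.Theory.

Lemma fuel_unfold n m : compositions_fuel n.+1 m = if m == 0%N then [:: [::]] else
    flatten [seq [seq a :: t | t <- compositions_fuel n (m - a)] | a <- iota 1 m].
Proof. by []. Qed.

Lemma fuel_step n m : (m <= n)%N -> compositions_fuel n.+1 m = compositions_fuel n m.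
Proof.
elim: n m => [|n IH] m hm.
  by move: hm; rewrite leqn0 => /eqP ->.
rewrite fuel_unfold [in RHS]fuel_unfold; case: eqP => // hm0.
congr flatten; apply/eq_in_map => a; rewrite mem_iota => /andP[ha1 ha2].
by rewrite IH //; lia.
Qed.

Lemma fuelE n m : (m <= n)%N -> compositions_fuel n m = compositions m.
Proof.
move=> h; rewrite /compositions; elim: n h => [|n IH] h.
  by move: h; rewrite leqn0 => /eqP ->.
case: (ltnP m n.+1) => h2; last first.
  by have -> : n.+1 = m by apply/eqP; rewrite eqn_leq h h2.
by rewrite fuel_step ?IH.
Qed.

Lemma compositionsS m : (0 < m)%N ->
  compositions m = flatten [seq [seq a :: t | t <- compositions (m - a)] | a <- iota 1 m].
Proof.
case: m => // m _; rewrite /compositions fuel_unfold.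
congr flatten; apply/eq_in_map => a; rewrite mem_iota => /andP[ha1 ha2].
by rewrite fuelE //; lia.
Qed.

Lemma mem_compositions_fuel n m s : s \in compositions_fuel n m ->
  all (fun a => 0 < a)%N s && (sumn s == m).
Proof.
elim: n m s => [|n IH] m s.
  by rewrite /=; case: eqP => // ->; rewrite inE => /eqP ->.
rewrite fuel_unfold; case: eqP => [->|hm]; first by rewrite inE => /eqP ->.
move=> /flattenP[l /mapP[a]]; rewrite mem_iota => /andP[ha1 ha2] -> /mapP[t ht ->].
move/IH: ht => /andP[h1 /eqP h2] /=; rewrite ha1 h1 h2 /=; apply/eqP; lia.
Qed.


Local Open Scope ring_scope.

Definition Good (delta : nat) (h : int) (s : seq nat) : bool :=
  all (fun j => `|h - altsum (take j s)| <= delta)%N (iota 1 (size s))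
  && (`|h - altsum s| <= 1)%N.

Lemma Good_cons delta h a u :
  Good delta h (a :: u) = (`|h - a%:Z| <= delta)%N && Good delta (a%:Z - h) u.
Proof.
have E : forall X : int, absz (h - (a%:Z - X))%R = absz ((a%:Z - h) - X)%R.
  by move=> X; rewrite -abszN; congr absz; ring.
rewrite /Good /= take0 /= subr0 -andbA E; congr (_ && _).
rewrite (iotaDl 1 1) all_map; congr (_ && _); apply: eq_all => j /=.
by rewrite /= add0n E.
Qed.

Definition Zc (delta : nat) (m : nat) (h : int) : nat := count (Good delta h) (compositions m).

Lemma Zc0 delta h : Zc delta 0 h = (`|h| <= 1)%N.
Proof. by rewrite /Zc /compositions /= /Good /= subr0 addn0. Qed.

Lemma ZcS delta m h : (0 < m)%N ->
  (Zc delta m h = \sum_(1 <= a < m.+1) (`|(h - a%:Z)%R| <= delta) * Zc delta (m - a) (a%:Z - h)%R)%N.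
Proof.
move=> hm; rewrite /Zc compositionsS // count_flatten sumnE big_map /index_iota subn1 /=.
rewrite big_map; apply: eq_bigr => a _; rewrite count_map.
under eq_count => t do rewrite /= Good_cons.
case: (`|h - a%:Z| <= delta)%N; rewrite ?mul1n ?mul0n //.
by rewrite count_pred0.
Qed.

Lemma ZcSS delta m h :
  (Zc delta m.+2 h = (`|(h - 1)%R| <= delta) * Zc delta m.+1 (1 - h)%R + Zc delta m.+1 (h - 1)%R)%N.
Proof.
rewrite ZcS // big_ltn // subSS subn0; congr (_ + _).
rewrite (@ZcS _ m.+1) // big_add1 /=.
apply: eq_bigr => a _.
have -> : (h - a.+1%:Z) = (h - 1) - a%:Z by rewrite -addn1 PoszD; ring.
have -> : (a.+1%:Z - h) = a%:Z - (h - 1) by rewrite -addn1 PoszD; ring.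
by rewrite subSS.
Qed.

Lemma Zc_low delta m : Zc delta m.+1 (- (delta.+1)%:Z) = 0%N.
Proof.
rewrite ZcS // big_nat big1 // => a /andP[ha _].
suff -> : (`|- (delta.+1)%:Z - a%:Z| <= delta)%N = false by [].
apply/negbTE; rewrite -ltnNge; lia.
Qed.

Lemma zetaE m delta : (0 < m)%N -> zeta m delta = Zc delta m 0.
Proof.
move=> hm; rewrite /zeta /Zc; apply: eq_in_count => s hs.
move: (@mem_compositions_fuel m m s hs) => /andP[h1 h2].
rewrite /deviation_set /Good h1 h2 /= sub0r abszN andbC; congr (_ && _).
by apply: eq_all => j; rewrite sub0r abszN.
Qed.

Set Implicit Arguments. Unset Strict Implicit.

Definition ww (z : algC) (i : nat) := z ^+ (2 * i + 1).
Definition lam (z : algC) (i : nat) := ww z i + (ww z i)^-1.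
Definition cc (z : algC) (i : nat) (y : int) := ww z i ^ y + ww z i ^ (- y).
Definition UU (b : nat) (z : algC) (n : nat) (y : int) :=
  ((4 * b)%:R)^-1 * \sum_(i < 2 * b) lam z i ^+ n * (1 + lam z i) * cc z i y.

Lemma prim_neq0 (b : nat) (z : algC) : (0 < b)%N -> (4 * b).-primitive_root z -> z != 0.
Proof.
move=> hb hz; apply/negP => /eqP z0.
have := prim_expr_order hz; rewrite z0 expr0n.
have -> : (4 * b == 0)%N = false by apply/negbTE; lia.
by move/eqP; rewrite eq_sym oner_eq0.
Qed.

Lemma ww_neq0 b z i : (0 < b)%N -> (4 * b).-primitive_root z -> ww z i != 0.
Proof. by move=> hb hz; rewrite /ww expf_neq0 // (prim_neq0 hb hz). Qed.

Lemma cc_sym z i y : cc z i (- y) = cc z i y.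
Proof. by rewrite /cc opprK addrC. Qed.

Lemma cc_rec b z i y : (0 < b)%N -> (4 * b).-primitive_root z ->
  lam z i * cc z i y = cc z i (y + 1) + cc z i (y - 1).
Proof.
move=> hb hz; have h0 := ww_neq0 i hb hz.
rewrite /cc /lam !expfzDr // ?opprD ?opprK !expfzDr // expr1z exprN1.
move: (ww z i ^ y) (ww z i ^ (- y)) ((ww z i)^-1) => a1 a2 a4; move: (ww z i) => a3.
have E : forall a1 a2 a3 a4 : algC,
  (a3 + a4) * (a1 + a2) = a1 * a3 + a2 * a4 + (a1 * a4 + a2 * a3) by move=> *; ring.
exact: E.
Qed.

Lemma UU_rec b z n y : (0 < b)%N -> (4 * b).-primitive_root z ->
  UU b z n.+1 y = UU b z n (y + 1) + UU b z n (y - 1).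
Proof.
move=> hb hz; rewrite /UU -mulrDr -big_split; congr (_ * _); apply: eq_bigr => i _.
transitivity (lam z i ^+ n * (1 + lam z i) * (lam z i * cc z i y)).
  rewrite exprS; move: (lam z i ^+ n) (lam z i) (cc z i y) => a1 a2 a3.
  have E : forall a1 a2 a3 : algC, a2 * a1 * (1 + a2) * a3 = a1 * (1 + a2) * (a2 * a3)
    by move=> *; ring.
  exact: E.
by rewrite (cc_rec i y hb hz) mulrDr.
Qed.

Lemma UU_sym b z n y : UU b z n (- y) = UU b z n y.
Proof. by rewrite /UU; under eq_bigr => i _ do rewrite cc_sym. Qed.

Lemma z2b b (z : algC) : (0 < b)%N -> (4 * b).-primitive_root z -> z ^+ (2 * b) = -1.
Proof.
move=> hb hz.
have h1 : (z ^+ (2 * b)) ^+ 2 = 1.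
  by rewrite -exprM (_ : (2 * b * 2 = 4 * b)%N) ?(prim_expr_order hz) //; lia.
move/eqP: h1; rewrite sqrf_eq1 => /orP[|/eqP //].
rewrite -(prim_order_dvd hz) => /dvdn_leq H.
have : (4 * b <= 2 * b)%N by apply: H; lia.
lia.
Qed.

Lemma geom0 (q : algC) n : q != 1 -> q ^+ n = 1 -> \sum_(i < n) q ^+ i = 0.
Proof.
move=> hq hn; have := subrX1 q n; rewrite hn subrr => /esym/eqP.
by rewrite mulf_eq0 subr_eq0 (negbTE hq) => /eqP.
Qed.

Lemma S_nat b (z : algC) n : (0 < b)%N -> (4 * b).-primitive_root z -> (n < 2 * b)%N ->
  \sum_(i < 2 * b) (z ^+ (2 * i + 1)) ^+ n = (n == 0)%:R * (2 * b)%:R.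
Proof.
move=> hb hz hn; case: (posnP n) => [->|n0].
  by rewrite sumr_const card_ord /= mul1r.
rewrite mul0r.
have E : forall i : nat, ((2 * i + 1) * n = n + (2 * n) * i)%N by move=> i; lia.
under eq_bigr => i _ do rewrite -exprM E exprD exprM.
rewrite -mulr_sumr; apply/eqP; rewrite mulf_eq0; apply/orP; right; apply/eqP.
apply: geom0.
  rewrite -(prim_order_dvd hz); apply/negP => /dvdn_leq H.
  have : (4 * b <= 2 * n)%N by apply: H; lia.
  lia.
rewrite -exprM (_ : (2 * n * (2 * b) = 4 * b * n)%N); last by lia.
by rewrite exprM (prim_expr_order hz) expr1n.
Qed.

Lemma primV b (z : algC) : (0 < b)%N -> (4 * b).-primitive_root z -> (4 * b).-primitive_root (z^-1).
Proof.
move=> hb hz.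
have E : z^-1 = z ^+ (4 * b).-1.
  have hz0 := prim_neq0 hb hz.
  apply: (mulfI hz0); rewrite mulfV // -exprS prednK ?(prim_expr_order hz) //; lia.
rewrite E prim_root_exp_coprime //.
have -> : (4 * b = (4 * b).-1.+1)%N by lia.
by rewrite /= coprimenS.
Qed.

Lemma S_int b z (t : int) : (0 < b)%N -> (4 * b).-primitive_root z -> (`|t| < 2 * b)%N ->
  \sum_(i < 2 * b) ww z i ^ t = (t == 0)%:R * (2 * b)%:R.
Proof.
move=> hb hz; case: t => n /= hn.
  by rewrite -(S_nat hb hz hn); apply: eq_bigr => i _; rewrite /ww.
rewrite -(S_nat hb (primV hb hz) hn) /=.
apply: eq_bigr => i _; rewrite /ww /exprz exprVn.
by rewrite -exprVn -exprVn.
Qed.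

Lemma sq_m1 (x : algC) : x ^+ 2 = -1 -> x + x^-1 = 0.
Proof.
move=> hx; have x0 : x != 0.
  by apply/negP => /eqP x0; move: hx; rewrite x0 expr0n /= => /eqP; rewrite eq_sym oppr_eq0 oner_eq0.
transitivity (x^-1 * (x ^+ 2 + 1)); first by field.
by rewrite hx addNr mulr0.
Qed.

Lemma cc_bound b (z : algC) i : (0 < b)%N -> (4 * b).-primitive_root z -> cc z i (b%:Z) = 0.
Proof.
move=> hb hz; rewrite /cc -invr_expz; apply: sq_m1.
rewrite /ww /= -!exprM (_ : ((2 * i + 1) * (b * 2) = 2 * b * (2 * i + 1))%N); last by lia.
by rewrite exprM (z2b hb hz) -signr_odd addn1 /= oddM.
Qed.

Lemma UU_bound b z n : (0 < b)%N -> (4 * b).-primitive_root z -> UU b z n (b%:Z) = 0.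
Proof.
move=> hb hz; rewrite /UU big1 ?mulr0 // => i _.
by rewrite (cc_bound i hb hz) mulr0.
Qed.

Lemma bool3 (y : int) :
  ((y == 0)%:R + (y + 1 == 0)%:R + (y - 1 == 0)%:R : algC) = ((`|y| <= 1)%N)%:R.
Proof.
by case: y => [[|[|n]]|[|n]] /=; rewrite ?addr0 ?add0r.
Qed.

Lemma sum_cc b (z : algC) (t : int) : (0 < b)%N -> (4 * b).-primitive_root z -> (`|t| < 2 * b)%N ->
  \sum_(i < 2 * b) cc z i t = (t == 0)%:R * (4 * b)%:R.
Proof.
move=> hb hz ht; rewrite /cc big_split /= !S_int // ?abszN // oppr_eq0 -mulrDr -natrD.
by congr (_ * _%:R); lia.
Qed.

Lemma UU_base b (z : algC) (y : int) : (0 < b)%N -> (4 * b).-primitive_root z -> (`|y| < b)%N ->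
  UU b z 0 y = ((`|y| <= 1)%N)%:R.
Proof.
move=> hb hz hy; rewrite /UU.
under eq_bigr => i _ do rewrite expr0 mul1r mulrDl mul1r (cc_rec i y hb hz).
rewrite !big_split /= !S_int // ?abszN; try lia.
rewrite !oppr_eq0.
have E : forall x : algC, x * (2 * b)%:R + x * (2 * b)%:R = x * (4 * b)%:R.
  by move=> x; rewrite -mulrDr -natrD; congr (_ * _%:R); lia.
rewrite !E.
rewrite -bool3 -!mulrDl mulrC mulrK //.
  by rewrite addrA.
by rewrite unitfE pnatr_eq0; lia.
Qed.


Lemma Zc_UU delta (z : algC) n (h : int) : (0 < delta)%N -> (4 * delta.+1).-primitive_root z ->
  - (delta%:Z) <= h <= (delta.+1)%:Z ->
  (Zc delta n.+1 h)%:R = UU delta.+1 z n (h - 1).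
Proof.
move=> hd hz; have hb : (0 < delta.+1)%N by [].
elim: n h => [|n IH] h /andP[h1 h2].
  rewrite ZcS // big_nat1 Zc0 (_ : Posz 1 = 1%R) //.
  have [->|hne] := eqVneq h (- (delta%:Z)).
    have -> : (- delta%:Z - 1) = - (delta.+1%:Z) by rewrite -addn1 PoszD; ring.
    rewrite UU_sym UU_bound //.
    have -> : (`|(- (delta.+1%:Z))%R| <= delta)%N = false by apply/negbTE; lia.
    by rewrite mul0n.
  have -> : (`|(h - 1)%R| <= delta)%N = true by lia.
  rewrite UU_base //; last by lia.
  have -> : ((1 : nat)%:Z - h) = - (h - 1) by ring.
  by rewrite abszN mul1n.
rewrite ZcSS.
have [->|hne] := eqVneq h (- (delta%:Z)).
  have -> : (- delta%:Z - 1) = - (delta.+1%:Z) by rewrite -addn1 PoszD; ring.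
  rewrite UU_sym UU_bound // Zc_low.
  have -> : (`|(- (delta.+1%:Z))%R| <= delta)%N = false by apply/negbTE; lia.
  by [].
have -> : (`|(h - 1)%R| <= delta)%N = true by lia.
rewrite mul1n natrD !IH; try (apply/andP; split; lia).
have -> : 1 - h - 1 = - h by ring.
rewrite UU_sym UU_rec //.
by have -> : h - 1 + 1 = h by ring.
Qed.

Lemma zeta_UU delta (z : algC) m : (0 < delta)%N -> (4 * delta.+1).-primitive_root z ->
  (0 < m)%N -> (zeta m delta)%:R = UU delta.+1 z m.-1 1.
Proof.
move=> hd hz hm; rewrite zetaE //.
have -> : m = m.-1.+1 by lia.
rewrite (@Zc_UU delta z) //; last by apply/andP; split; lia.
by rewrite sub0r UU_sym.
Qed.


Lemma half_sum (F : nat -> algC) b :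
  (forall i, (i < b)%N -> F (b - 1 - i)%N = F i) -> (odd b -> F b./2 = 0) ->
  \sum_(i < b) F i = 2 * \sum_(i < b./2) F i.
Proof.
move=> hF h0.
have [c hc] : exists c, b = (c + (c + odd b))%N by exists b./2; lia.
have hcb : b./2 = c by lia.
have h0' : odd b -> F c = 0 by rewrite -hcb.
rewrite hcb; clear h0; move: hF h0'; rewrite hc => hF h0.
rewrite big_split_ord /= mulrDl mul1r; congr (_ + _).
case: (odd b) hF h0 => /= hF h0.
  rewrite addn1 big_ord_recl /= addn0 h0; last by lia.
  rewrite add0r (reindex_inj rev_ord_inj) /=; apply: eq_bigr => i _.
  have hi := ltn_ord i.
  rewrite -(hF i); last by lia.
  congr F; rewrite /bump /=; lia.
rewrite addn0 (reindex_inj rev_ord_inj) /=; apply: eq_bigr => i _.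
have hi := ltn_ord i.
rewrite -(hF i); last by lia.
congr F; lia.
Qed.

Lemma lam_shift b (z : algC) i : (0 < b)%N -> (4 * b).-primitive_root z ->
  lam z (b + i) = - lam z i.
Proof.
move=> hb hz; have E : ww z (b + i) = - ww z i.
  rewrite /ww (_ : (2 * (b + i) + 1 = 2 * b + (2 * i + 1))%N); last by lia.
  by rewrite exprD (z2b hb hz) mulN1r.
by rewrite /lam E invrN opprD.
Qed.

Lemma lam_rev b (z : algC) i : (0 < b)%N -> (4 * b).-primitive_root z -> (i < b)%N ->
  lam z (b - 1 - i) = - lam z i.
Proof.
move=> hb hz hi; have h0 := ww_neq0 i hb hz.
have E : ww z (b - 1 - i) * ww z i = -1.
  rewrite /ww -exprD (_ : (2 * (b - 1 - i) + 1 + (2 * i + 1) = 2 * b)%N); last by lia.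
  by rewrite (z2b hb hz).
have E2 : ww z (b - 1 - i) = - (ww z i)^-1.
  by apply: (mulIf h0); rewrite E mulNr mulVf.
by rewrite /lam E2 invrN invrK opprD addrC.
Qed.

Lemma lam_mid b (z : algC) : (0 < b)%N -> (4 * b).-primitive_root z -> odd b ->
  lam z b./2 = 0.
Proof.
move=> hb hz ho; rewrite /lam; apply: sq_m1.
rewrite /ww -exprM (_ : ((2 * b./2 + 1) * 2 = 2 * b)%N); last by lia.
by rewrite (z2b hb hz).
Qed.


Lemma parity (x : algC) m :
  x ^+ m + x ^+ m.+1 + ((- x) ^+ m + (- x) ^+ m.+1) = 2 * (x ^+ 2) ^+ ((m + 1) %/ 2).
Proof.
rewrite (exprNn x m) (exprNn x m.+1) -[(-1) ^+ m]signr_odd -[(-1) ^+ m.+1]signr_odd /= -exprM.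
case: (boolP (odd m)) => ho /=.
  rewrite (_ : (2 * ((m + 1) %/ 2) = m.+1)%N); last by lia.
  rewrite expr1 expr0; move: (x ^+ m) (x ^+ m.+1) => a c.
  have E : forall a c : algC, a + c + (-1 * a + 1 * c) = 2 * c by move=> *; ring.
  exact: E.
rewrite (_ : (2 * ((m + 1) %/ 2) = m)%N); last by lia.
rewrite expr1 expr0; move: (x ^+ m) (x ^+ m.+1) => a c.
have E : forall a c : algC, a + c + (1 * a + -1 * c) = 2 * a by move=> *; ring.
exact: E.
Qed.

Lemma UU_final b (z : algC) m : (0 < b)%N -> (4 * b).-primitive_root z -> (0 < m)%N ->
  UU b z m.-1 1 = b%:R^-1 * \sum_(i < b./2) (lam z i ^+ 2) ^+ ((m + 1) %/ 2).
Proof.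
move=> hb hz hm; rewrite /UU.
have E1 : forall i, lam z i ^+ m.-1 * (1 + lam z i) * cc z i 1 = lam z i ^+ m + lam z i ^+ m.+1.
  move=> i; rewrite /cc expr1z exprN1 -/(lam z i).
  case: m hm => // m' _ /=; rewrite !exprS; move: (lam z i ^+ m') (lam z i) => a c.
  have E : forall a c : algC, a * (1 + c) * c = c * a + c * (c * a) by move=> *; ring.
  exact: E.
under eq_bigr => i _ do rewrite E1.
rewrite (_ : (2 * b = b + b)%N); last by lia.
rewrite big_split_ord /=.
under [X in _ + X]eq_bigr => i _ do rewrite (lam_shift i hb hz).
rewrite -big_split /=.
under eq_bigr => i _ do rewrite parity.
rewrite -mulr_sumr (half_sum (F := fun i => (lam z i ^+ 2) ^+ ((m + 1) %/ 2))).
- have E : forall (B X : algC), B != 0 -> (4 * B)^-1 * (2 * (2 * X)) = B^-1 * X.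
    by move=> B X hB; field.
  by rewrite natrM E // pnatr_eq0; lia.
- by move=> i hi /=; rewrite (lam_rev hb hz hi) sqrrN.
- move=> ho /=; rewrite (lam_mid hb hz ho) expr0n /= expr0n.
  by have -> : ((m + 1) %/ 2 == 0)%N = false by apply/negbTE; lia.
Qed.


Lemma two_neq0 : (2 : algC) != 0.
Proof. by rewrite pnatr_eq0. Qed.

Lemma eval_AB (p : {poly algC}) n
  (hp : forall x : algC,
      p.[x] = ((1 + sqrtC (1 - 4 * x)) / 2) ^+ n + ((1 - sqrtC (1 - 4 * x)) / 2) ^+ n)
  (A B : algC) : A + B = 1 -> p.[A * B] = A ^+ n + B ^+ n.
Proof.
move=> hAB; rewrite hp; move: (sqrtCK (1 - 4 * (A * B))).
move: (sqrtC (1 - 4 * (A * B))) => s hs.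
have : (A - B) ^+ 2 == s ^+ 2.
  rewrite hs; apply/eqP.
  have E : forall A B : algC, (A - B) ^+ 2 = (A + B) ^+ 2 - 4 * (A * B) by move=> *; ring.
  by rewrite E hAB expr1n.
have EA : forall A B : algC, A + B = 1 -> (1 + (A - B)) / 2 = A.
  move=> A' B' h; rewrite -[X in (1 + _) / X]/(1 + 1 : algC).
  transitivity ((A' + B' + (A' - B')) / (1 + 1)); first by rewrite h.
  by field.
have EB : forall A B : algC, A + B = 1 -> (1 - (A - B)) / 2 = B.
  move=> A' B' h; rewrite -[X in (1 - _) / X]/(1 + 1 : algC).
  transitivity ((A' + B' - (A' - B')) / (1 + 1)); first by rewrite h.
  by field.
rewrite eqf_sqr => /orP[/eqP hs1|/eqP hs1].
  by rewrite -hs1 EA // EB.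
rewrite -[s]opprK -hs1 EB // opprK EA //.
by rewrite addrC.
Qed.

Fixpoint PP (k : nat) : {poly algC} * {poly algC} :=
  match k with
  | 0 => (2%:P, 1)
  | k'.+1 => ((PP k').2, (PP k').2 - (PP k').1 * 'X)
  end.

Lemma PP_eval (A B : algC) k : A + B = 1 ->
  ((PP k).1).[A * B] = A ^+ k + B ^+ k /\ ((PP k).2).[A * B] = A ^+ k.+1 + B ^+ k.+1.
Proof.
move=> hAB; elim: k => [|k [IH1 IH2]] /=.
  by rewrite hornerC hornerE expr1 expr1 hAB expr0.
split => //; rewrite hornerD hornerN hornerMX IH1 IH2.
rewrite !(exprS A) !(exprS B); move: (A ^+ k) (B ^+ k) => a c.
have E : forall A B a c : algC, A + B = 1 ->
   A * a + B * c - (a + c) * (A * B) = A * (A * a) + B * (B * c).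
  move=> A' B' a' c' h.
  transitivity ((A' + B') * (A' * a' + B' * c') - (a' + c') * (A' * B')); first by rewrite h mul1r.
  by ring.
exact: E.
Qed.

Lemma PP_size k : (size (PP k).1 <= k./2 + 1)%N /\ (size (PP k).2 <= k.+1./2 + 1)%N.
Proof.
elim: k => [|k [IH1 IH2]] /=.
  by rewrite size_polyC size_poly1; split => //; case: (_ != _).
split => //.
apply: (leq_trans (size_polyD _ _)); rewrite size_polyN geq_max.
have := size_polyMleq (PP k).1 'X; rewrite size_polyX => h.
move: h; rewrite -[(2%R : nat)]/(2%N) => h.
apply/andP; split; first by apply: (leq_trans IH2); lia.
apply: (leq_trans h); lia.
Qed.

Lemma poly_ext (p q : {poly algC}) : (forall x, p.[x] = q.[x]) -> p = q.
Proof.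
move=> hpq; apply/eqP; rewrite -subr_eq0; apply/negPn/negP => hne.
set L := [seq i%:R | i <- iota 0 (size (p - q))] : seq algC.
have HA : all (root (p - q)) L.
  by apply/allP => x _; rewrite /root hornerD hornerN hpq subrr.
have HU : uniq L.
  rewrite map_inj_in_uniq ?iota_uniq // => i j _ _ /eqP.
  by rewrite eqr_nat => /eqP.
have := max_poly_roots hne HA HU.
by rewrite size_map size_iota ltnn.
Qed.


Lemma one_plus_v b (z : algC) i : (0 < b)%N -> (4 * b).-primitive_root z -> (i < b./2)%N ->
  1 + ww z i ^+ 2 != 0.
Proof.
move=> hb hz hi; apply/negP => /eqP h.
have hv : ww z i ^+ 2 = -1 by rewrite -(addKr 1 (ww z i ^+ 2)) h addr0.
have : (ww z i ^+ 2) ^+ 2 = 1 by rewrite hv sqrrN expr1n.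
rewrite /ww -!exprM => /eqP; rewrite -(prim_order_dvd hz) => /dvdn_leq H.
have := H ltac:(lia); lia.
Qed.

Lemma vpow b (z : algC) i : (0 < b)%N -> (4 * b).-primitive_root z ->
  (ww z i ^+ 2) ^+ b = -1.
Proof.
move=> hb hz; rewrite /ww -!exprM mulnC.
by rewrite exprM (z2b hb hz) -signr_odd addn1 /= oddM.
Qed.

Lemma root_i b (z : algC) i (p : {poly algC}) : (0 < b)%N -> (4 * b).-primitive_root z ->
  (i < b./2)%N -> (forall A B : algC, A + B = 1 -> p.[A * B] = A ^+ b + B ^+ b) ->
  p.[(lam z i ^+ 2)^-1] = 0.
Proof.
move=> hb hz hi hev.
have hw := ww_neq0 i hb hz; have hv := one_plus_v hb hz hi.
have hvb := vpow i hb hz.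
rewrite /lam; move: hw hv hvb; move: (ww z i) => w hw hv hvb.
have E : ((w + w^-1) ^+ 2)^-1 = (w ^+ 2 / (1 + w ^+ 2)) * (1 / (1 + w ^+ 2)).
  by field; rewrite ?hw ?hv.
have E2 : w ^+ 2 / (1 + w ^+ 2) + 1 / (1 + w ^+ 2) = 1 by field; rewrite ?hv.
rewrite E hev // !expr_div_n hvb expr1n -mulrDl addNr mul0r //.
Qed.

Lemma mu_inj b (z : algC) i j : (0 < b)%N -> (4 * b).-primitive_root z ->
  (i < b./2)%N -> (j < b./2)%N -> lam z i ^+ 2 = lam z j ^+ 2 -> i = j.
Proof.
move=> hb hz hi hj.
have hwi := ww_neq0 i hb hz; have hwj := ww_neq0 j hb hz.
have Emu : forall w : algC, w != 0 -> (w + w^-1) ^+ 2 = w ^+ 2 + 2 + (w ^+ 2)^-1.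
  by move=> w hw; field.
have Eac : forall a c : algC, a != 0 -> c != 0 -> a + a^-1 = c + c^-1 -> (a - c) * (a * c - 1) = 0.
  move=> a c ha hc h.
  transitivity (a * c * ((a + a^-1) - (c + c^-1))); first by field; rewrite ha hc.
  by rewrite h subrr mulr0.
rewrite /lam !Emu // => h.
have h' : ww z i ^+ 2 + (ww z i ^+ 2)^-1 = ww z j ^+ 2 + (ww z j ^+ 2)^-1.
  by move: h; rewrite (addrAC (ww z i ^+ 2)) (addrAC (ww z j ^+ 2)) => /addIr.
move/eqP: (Eac _ _ (expf_neq0 2 hwi) (expf_neq0 2 hwj) h'); rewrite mulf_eq0 => /orP[|].
  rewrite subr_eq0 /ww -!exprM (eq_prim_root_expr hz) !modn_small; try lia.
rewrite subr_eq0 /ww -!exprM -exprD -(prim_order_dvd hz) => /dvdn_leq H.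
have := H ltac:(lia); lia.
Qed.


Unset Implicit Arguments.

Theorem theorem3 (delta : nat) (hdelta : (0 < delta)%N)
  (p : {poly algC})
  (hp : forall x : algC,
      p.[x] = ((1 + sqrtC (1 - 4 * x)) / 2) ^+ delta.+1
            + ((1 - sqrtC (1 - 4 * x)) / 2) ^+ delta.+1)
  (rs : seq algC)
  (hrs : p = lead_coef p *: \prod_(r <- rs) ('X - r%:P))
  (m : nat) (hm : (0 < m)%N) :
  (zeta m delta)%:R
  = (delta.+1)%:R^-1 * \sum_(r <- rs) (r^-1) ^+ ((m + 1) %/ 2).
Proof.
set b := delta.+1.
have hb : (0 < b)%N by [].
have [z hz] := C_prim_root_exists (n := 4 * b) ltac:(lia).
rewrite (zeta_UU hdelta hz hm) (UU_final hb hz hm); congr (_ * _).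
have hev := eval_AB hp.
have hpP : p = (PP b).1.
  apply: poly_ext => x.
  set s := sqrtC (1 - 4 * x).
  have hs : s ^+ 2 = 1 - 4 * x by rewrite sqrtCK.
  have hAB : (1 + s) / 2 + (1 - s) / 2 = 1 by field.
  have hx : (1 + s) / 2 * ((1 - s) / 2) = x.
    transitivity ((1 - s ^+ 2) / 4); first by field; rewrite ?two_neq0 ?pnatr_eq0.
    by rewrite hs; field.
  have := (PP_eval b hAB).1; rewrite hx => ->.
  by rewrite hp.
have hsize : (size p <= b./2 + 1)%N by rewrite hpP; exact: (PP_size b).1.
have hp0 : p != 0.
  apply/negP => /eqP p0; have := hev 1 0 (addr0 1); rewrite p0 horner0 expr1n expr0n /=.
  by rewrite addr0 => /eqP; rewrite eq_sym oner_eq0.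
have hc : lead_coef p != 0 by rewrite lead_coef_eq0.
set js := [seq (lam z i ^+ 2)^-1 | i <- iota 0 b./2].
have hju : uniq js.
  rewrite map_inj_in_uniq ?iota_uniq // => i j; rewrite !mem_iota /= => hi hj /invr_inj.
  by apply: (mu_inj hb hz); lia.
have hsub : {subset js <= rs}.
  move=> r /mapP[i]; rewrite mem_iota /= => hi ->.
  have hr := root_i hb hz (i := i) (p := p) ltac:(lia) hev.
  have : root p ((lam z i ^+ 2)^-1) by rewrite /root hr.
  by rewrite hrs rootZ // root_prod_XsubC.
have hsz : (size rs <= size js)%N.
  rewrite size_map size_iota.
  move: hsize; rewrite hrs size_scale // size_prod_XsubC; lia.
have [hs1 hs2] := uniq_min_size hju hsub hsz.
have hru : uniq rs by rewrite (uniq_size_uniq hju hs2) hs1.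
rewrite -(perm_big _ (uniq_perm hju hru hs2)) big_map.
rewrite -(big_mkord xpredT (fun i => (lam z i ^+ 2) ^+ ((m + 1) %/ 2))) /index_iota subn0.
by apply: eq_bigr => i _; rewrite invrK.
Qed.
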